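(* Let $\vec r:\mathbb{Z}\to\mathbb{R}^2$ be a nondegenerate discrete planar curve whose first and second centroaffine curvatures $\kappa_n,\bar\kappa_n$ are $6$-periodic in $n$. Then $\vec r$ is a convex hexagon with parallel and equi-length opposite sides (i.e. $\vec r$ is closed with period $6$, simple, convex, and $\vec t_{k+3}=-\vec t_k$ for all $k$) if and only if for all $n$ $$\kappa_n>0,\qquad \kappa_n=\kappa_{n+3}=\frac{1}{\bar\kappa_{n+1}}=\frac{1}{\bar\kappa_{n+4}},\qquad \kappa_n\kappa_{n+1}\kappa_{n+2}=1.$$
   Context: A discrete planar curve is a map $\vec r:\mathbb{Z}\to\mathbb{R}^2$; $\vec r_k=\vec r(k)$, $\vec t_k=\vec r_{k+1}-\vec r_k$, $[\vec a,\vec b]$ the $2\times2$ determinant. Nondegenerate: $[\vec t_{k-1},\vec t_k]\ne0$ for all $k$. First and second centroaffine curvatures: $\kappa_k=\frac{[\vec t_k,\vec t_{k+1}]}{[\vec t_{k-1},\vec t_k]}$, $\bar\kappa_k=\frac{[\vec t_{k-1},\vec t_{k+1}]}{[\vec t_{k-1},\vec t_k]}$. Closed with period $q$: $\vec r(k+q)=\vec r(k)$ for all $k$, $q$ minimal. Extend $\vec r$ to $\mathbb{R}$ by linear interpolation on each $[k,k+1]$; a closed curve is simple if this map is injective on $[k,k+q)$. Convex: for each line through $\vec r_k,\vec r_{k+1}$, all vertices lie in one closed half-plane bounded by it. *)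

(* Defs.v *)
From Stdlib Require Import Reals Lra Lia ZArith.
Open Scope R_scope.

Definition pt := (R * R)%type.
Definition vsub (a b : pt) : pt := (fst a - fst b, snd a - snd b).
Definition vopp (a : pt) : pt := (- fst a, - snd a).
Definition vadd (a b : pt) : pt := (fst a + fst b, snd a + snd b).
Definition vscale (c : R) (a : pt) : pt := (c * fst a, c * snd a).
Definition det (a b : pt) : R := fst a * snd b - snd a * fst b.

Definition tan (r : Z -> pt) (k : Z) : pt := vsub (r (k + 1)%Z) (r k).

Definition nondegenerate (r : Z -> pt) : Prop :=
  forall k : Z, det (tan r (k - 1)%Z) (tan r k) <> 0.

Definition kappa (r : Z -> pt) (k : Z) : R :=
  det (tan r k) (tan r (k + 1)%Z) / det (tan r (k - 1)%Z) (tan r k).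

Definition kappabar (r : Z -> pt) (k : Z) : R :=
  det (tan r (k - 1)%Z) (tan r (k + 1)%Z) / det (tan r (k - 1)%Z) (tan r k).

Definition closed_with_period (r : Z -> pt) (q : Z) : Prop :=
  (0 < q)%Z /\ (forall k, r (k + q)%Z = r k) /\
  (forall p, (0 < p < q)%Z -> ~ (forall k, r (k + p)%Z = r k)).

(* piecewise-linear extension of r to the reals; Int_part s = floor s *)
Definition rlin (r : Z -> pt) (s : R) : pt :=
  let k := Int_part s in vadd (r k) (vscale (s - IZR k) (tan r k)).

Definition simple_closed (r : Z -> pt) (q : Z) : Prop :=
  forall (k : Z) (s1 s2 : R),
    IZR k <= s1 < IZR k + IZR q -> IZR k <= s2 < IZR k + IZR q ->
    rlin r s1 = rlin r s2 -> s1 = s2.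

Definition convex (r : Z -> pt) : Prop :=
  forall k : Z,
    (forall j : Z, 0 <= det (tan r k) (vsub (r j) (r k))) \/
    (forall j : Z, det (tan r k) (vsub (r j) (r k)) <= 0).

Definition parallel_hexagon (r : Z -> pt) : Prop :=
  closed_with_period r 6 /\ simple_closed r 6 /\ convex r /\
  (forall k : Z, tan r (k + 3)%Z = vopp (tan r k)).

(* Main.v *)
Require Import Defs.
From Stdlib Require Import Reals ZArith Lra Lia Psatz.
Open Scope R_scope.

Definition Fd (x0 y0 x1 y1 zx zy : R) := (x1-x0)*(zy-y0) - (y1-y0)*(zx-x0).
Definition D1e (x0 y0 x1 y1 x2 y2 : R) := (x1-x0)*(y2-y1) - (y1-y0)*(x2-x1).

Lemma L1 x0 y0 x1 y1 ax ay bx b_y u v :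
  x0 + u*(x1-x0) = ax + v*(bx-ax) -> y0 + u*(y1-y0) = ay + v*(b_y-ay) ->
  (1-v)*Fd x0 y0 x1 y1 ax ay + v*Fd x0 y0 x1 y1 bx b_y = 0.
Proof.
  intros ex ey. unfold Fd.
  assert (Hx : (1-v)*ax + v*bx - x0 = u*(x1-x0)) by lra.
  assert (Hy : (1-v)*ay + v*b_y - y0 = u*(y1-y0)) by lra.
  replace ((1 - v) * ((x1 - x0) * (ay - y0) - (y1 - y0) * (ax - x0)) +
   v * ((x1 - x0) * (b_y - y0) - (y1 - y0) * (bx - x0)))
  with ((x1-x0)*((1-v)*ay + v*b_y - y0) - (y1-y0)*((1-v)*ax + v*bx - x0)) by ring.
  rewrite Hx, Hy. ring.
Qed.

Lemma ind_zero c a1 a2 b1 b2 : c*a1 = 0 -> c*a2 = 0 -> c*(a1*b2 - a2*b1) = 0.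
Proof. intros h1 h2. replace (c*(a1*b2 - a2*b1)) with ((c*a1)*b2 - (c*a2)*b1) by ring.
  rewrite h1, h2; ring. Qed.

Section Hex.
Variables x0 x1 x2 x3 x4 x5 y0 y1 y2 y3 y4 y5 u v : R.
Hypothesis H4x : x4 = x3 - x1 + x0.
Hypothesis H4y : y4 = y3 - y1 + y0.
Hypothesis H5x : x5 = x3 - x2 + x0.
Hypothesis H5y : y5 = y3 - y2 + y0.
Hypothesis Hs : D1e x0 y0 x1 y1 x2 y2 * D1e x2 y2 x3 y3 x4 y4 > 0.

Let D1 := D1e x0 y0 x1 y1 x2 y2.
Let D3 := D1e x2 y2 x3 y3 x4 y4.

Lemma F2 : Fd x0 y0 x1 y1 x2 y2 = D1.
Proof. unfold D1, Fd, D1e. ring. Qed.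
Lemma F3 : Fd x0 y0 x1 y1 x3 y3 = D1 + D3.
Proof. unfold D1, D3, Fd, D1e. rewrite H4x, H4y. ring. Qed.
Lemma F4 : Fd x0 y0 x1 y1 x4 y4 = D1 + D3.
Proof. unfold D1, D3, Fd, D1e. rewrite H4x, H4y. ring. Qed.
Lemma F5 : Fd x0 y0 x1 y1 x5 y5 = D3.
Proof. unfold D1, D3, Fd, D1e. rewrite H5x, H5y, H4x, H4y. ring. Qed.
Lemma F0 : Fd x0 y0 x1 y1 x0 y0 = 0.
Proof. unfold Fd. ring. Qed.
Lemma F1 : Fd x0 y0 x1 y1 x1 y1 = 0.
Proof. unfold Fd. ring. Qed.

Lemma hconv : 0 <= Fd x0 y0 x1 y1 x0 y0 * D1 /\ 0 <= Fd x0 y0 x1 y1 x1 y1 * D1 /\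
  0 <= Fd x0 y0 x1 y1 x2 y2 * D1 /\ 0 <= Fd x0 y0 x1 y1 x3 y3 * D1 /\
  0 <= Fd x0 y0 x1 y1 x4 y4 * D1 /\ 0 <= Fd x0 y0 x1 y1 x5 y5 * D1.
Proof.
  rewrite F0, F1, F2, F3, F4, F5. fold D1 D3 in Hs.
  repeat split; nra.
Qed.

Hypothesis Hu : 0 <= u < 1.
Hypothesis Hv : 0 <= v < 1.

Lemma sep1 : x0 + u*(x1-x0) = x1 + v*(x2-x1) -> y0 + u*(y1-y0) = y1 + v*(y2-y1) -> False.
Proof using H4x H4y H5x H5y Hs Hu Hv.
  intros ex ey. pose proof (L1 _ _ _ _ _ _ _ _ u v ex ey) as h.
  rewrite F1, F2 in h. fold D1 D3 in Hs.
  assert (hD : D1 <> 0) by (intro hz; rewrite hz in Hs; lra).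
  assert (hv0 : v = 0).
  { assert (hh : v * D1 = 0) by lra. destruct (Rmult_integral _ _ hh); [assumption | contradiction]. }
  rewrite hv0 in ex, ey.
  assert (e1 : (1-u)*(x1-x0) = 0) by lra.
  assert (e2 : (1-u)*(y1-y0) = 0) by lra.
  pose proof (ind_zero _ _ _ (x2-x1) (y2-y1) e1 e2) as h2.
  fold (D1e x0 y0 x1 y1 x2 y2) in h2. fold D1 in h2. nra.
Qed.

Lemma sep2 : x0 + u*(x1-x0) = x2 + v*(x3-x2) -> y0 + u*(y1-y0) = y2 + v*(y3-y2) -> False.
Proof using H4x H4y H5x H5y Hs Hu Hv.
  intros ex ey. pose proof (L1 _ _ _ _ _ _ _ _ u v ex ey) as h.
  rewrite F2, F3 in h. fold D1 D3 in Hs. nra.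
Qed.
Lemma sep3 : x0 + u*(x1-x0) = x3 + v*(x4-x3) -> y0 + u*(y1-y0) = y3 + v*(y4-y3) -> False.
Proof using H4x H4y H5x H5y Hs Hu Hv.
  intros ex ey. pose proof (L1 _ _ _ _ _ _ _ _ u v ex ey) as h.
  rewrite F3, F4 in h. fold D1 D3 in Hs. nra.
Qed.
Lemma sep4 : x0 + u*(x1-x0) = x4 + v*(x5-x4) -> y0 + u*(y1-y0) = y4 + v*(y5-y4) -> False.
Proof using H4x H4y H5x H5y Hs Hu Hv.
  intros ex ey. pose proof (L1 _ _ _ _ _ _ _ _ u v ex ey) as h.
  rewrite F4, F5 in h. fold D1 D3 in Hs. nra.
Qed.
Lemma sep5 : x0 + u*(x1-x0) = x5 + v*(x0-x5) -> y0 + u*(y1-y0) = y5 + v*(y0-y5) -> False.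
Proof using H4x H4y H5x H5y Hs Hu Hv.
  intros ex ey. pose proof (L1 _ _ _ _ _ _ _ _ u v ex ey) as h.
  rewrite F5, F0 in h. fold D1 D3 in Hs.
  assert (hD : D3 <> 0) by (intro hz; rewrite hz in Hs; lra).
  assert (hh : (1-v) * D3 = 0) by lra. destruct (Rmult_integral _ _ hh); [lra | contradiction].
Qed.
End Hex.
Definition Dt (r : Z -> pt) (a : Z) : R := det (Defs.tan r (a-1)) (Defs.tan r a).
Definition Et (r : Z -> pt) (a : Z) : R := det (Defs.tan r (a-1)) (Defs.tan r (a+1)).

Lemma Dt_coord (r : Z -> pt) (a b c : Z) : b = (a+1)%Z -> c = (a+2)%Z ->
  Dt r b = D1e (fst (r a)) (snd (r a)) (fst (r b)) (snd (r b)) (fst (r c)) (snd (r c)).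
Proof.
  intros -> ->. unfold Dt, D1e, det, Defs.tan, vsub; simpl.
  replace (a+1-1)%Z with a by ring. replace (a+1+1)%Z with (a+2)%Z by ring. ring.
Qed.

Lemma same_sign (a b c : R) : a*b > 0 -> b*c > 0 -> a*c > 0.
Proof. intros h1 h2. destruct (Rlt_le_dec 0 b); [nra|].
  destruct (Req_dec b 0) as [e|e]; [subst; nra|]. nra. Qed.

Lemma per_mult (r : Z -> pt) : (forall a, r (a+6)%Z = r a) -> forall q a, r (a + 6*q)%Z = r a.
Proof.
  intros P6.
  assert (Hn : forall n : nat, forall a, r (a + 6 * Z.of_nat n)%Z = r a).
  { induction n as [|n IH]; intros a.
    - f_equal; lia.
    - replace (a + 6 * Z.of_nat (S n))%Z with ((a + 6 * Z.of_nat n) + 6)%Z by lia.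
      rewrite P6. apply IH. }
  intros q a. destruct (Z_le_dec 0 q) as [hq|hq].
  - replace q with (Z.of_nat (Z.to_nat q)) by lia. apply Hn.
  - rewrite <- (Hn (Z.to_nat (-q)) (a + 6*q)%Z). f_equal. lia.
Qed.

Section RL.
Variable r : Z -> pt.
Hypothesis TX : forall a b c d, b = (a+1)%Z -> c = (a+3)%Z -> d = (a+4)%Z ->
  fst (r d) = fst (r c) - fst (r b) + fst (r a).
Hypothesis TY : forall a b c d, b = (a+1)%Z -> c = (a+3)%Z -> d = (a+4)%Z ->
  snd (r d) = snd (r c) - snd (r b) + snd (r a).
Hypothesis P6 : forall a, r (a+6)%Z = r a.
Hypothesis Dpos : forall a b, b = (a+1)%Z -> Dt r b * Dt r a > 0.

Lemma hexhyps i :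
  fst (r (i+4)%Z) = fst (r (i+3)%Z) - fst (r (i+1)%Z) + fst (r i) /\
  snd (r (i+4)%Z) = snd (r (i+3)%Z) - snd (r (i+1)%Z) + snd (r i) /\
  fst (r (i+5)%Z) = fst (r (i+3)%Z) - fst (r (i+2)%Z) + fst (r i) /\
  snd (r (i+5)%Z) = snd (r (i+3)%Z) - snd (r (i+2)%Z) + snd (r i) /\
  D1e (fst (r i)) (snd (r i)) (fst (r (i+1)%Z)) (snd (r (i+1)%Z)) (fst (r (i+2)%Z)) (snd (r (i+2)%Z)) *
  D1e (fst (r (i+2)%Z)) (snd (r (i+2)%Z)) (fst (r (i+3)%Z)) (snd (r (i+3)%Z)) (fst (r (i+4)%Z)) (snd (r (i+4)%Z)) > 0.
Proof.
  pose proof (TX i (i+1)%Z (i+3)%Z (i+4)%Z eq_refl eq_refl eq_refl) as a1.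
  pose proof (TY i (i+1)%Z (i+3)%Z (i+4)%Z eq_refl eq_refl eq_refl) as a2.
  pose proof (TX (i+1)%Z (i+2)%Z (i+4)%Z (i+5)%Z ltac:(ring) ltac:(ring) ltac:(ring)) as a3.
  pose proof (TY (i+1)%Z (i+2)%Z (i+4)%Z (i+5)%Z ltac:(ring) ltac:(ring) ltac:(ring)) as a4.
  split; [exact a1|]. split; [exact a2|]. split; [lra|]. split; [lra|].
  rewrite <- (Dt_coord r i (i+1)%Z (i+2)%Z eq_refl eq_refl).
  rewrite <- (Dt_coord r (i+2)%Z (i+3)%Z (i+4)%Z ltac:(ring) ltac:(ring)).
  apply same_sign with (Dt r (i+2)%Z).
  - rewrite Rmult_comm. apply Dpos. lia.
  - rewrite Rmult_comm. apply Dpos. lia.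
Qed.

Lemma no_cross i j u v : (i < j)%Z -> (j < i + 6)%Z -> 0 <= u < 1 -> 0 <= v < 1 ->
  fst (r i) + u * (fst (r (i+1)%Z) - fst (r i)) = fst (r j) + v * (fst (r (j+1)%Z) - fst (r j)) ->
  snd (r i) + u * (snd (r (i+1)%Z) - snd (r i)) = snd (r j) + v * (snd (r (j+1)%Z) - snd (r j)) ->
  False.
Proof.
  intros h1 h2 hu hv ex ey.
  destruct (hexhyps i) as (e4x & e4y & e5x & e5y & hs).
  assert (j = i+1 \/ j = i+2 \/ j = i+3 \/ j = i+4 \/ j = i+5)%Z as hj by lia.
  destruct hj as [e|[e|[e|[e|e]]]]; subst j.
  - replace (i+1+1)%Z with (i+2)%Z in ex, ey by ring.
    exact (sep1 _ _ _ _ _ _ _ _ _ _ _ _ _ _ e4x e4y e5x e5y hs hu hv ex ey).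
  - replace (i+2+1)%Z with (i+3)%Z in ex, ey by ring.
    exact (sep2 _ _ _ _ _ _ _ _ _ _ _ _ _ _ e4x e4y e5x e5y hs hu hv ex ey).
  - replace (i+3+1)%Z with (i+4)%Z in ex, ey by ring.
    exact (sep3 _ _ _ _ _ _ _ _ _ _ _ _ _ _ e4x e4y e5x e5y hs hu hv ex ey).
  - replace (i+4+1)%Z with (i+5)%Z in ex, ey by ring.
    exact (sep4 _ _ _ _ _ _ _ _ _ _ _ _ _ _ e4x e4y e5x e5y hs hu hv ex ey).
  - replace (i+5+1)%Z with (i+6)%Z in ex, ey by ring. rewrite P6 in ex, ey.
    exact (sep5 _ _ _ _ _ _ _ _ _ _ _ _ _ _ e4x e4y e5x e5y hs hu hv ex ey).
Qed.

Lemma conv_all : convex r.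
Proof.
  intros k.
  destruct (hexhyps k) as (e4x & e4y & e5x & e5y & hs).
  pose proof (hconv _ _ _ _ _ _ _ _ _ _ _ _ e4x e4y e5x e5y) as hc.
  set (D1 := D1e (fst (r k)) (snd (r k)) (fst (r (k+1)%Z)) (snd (r (k+1)%Z)) (fst (r (k+2)%Z)) (snd (r (k+2)%Z))) in *.
  assert (key : forall j, 0 <= det (Defs.tan r k) (vsub (r j) (r k)) * D1).
  { intros j.
    pose proof (Z.mod_pos_bound (j - k) 6 ltac:(lia)) as hm.
    pose proof (Z_div_mod_eq_full (j - k) 6) as hd.
    replace j with ((k + (j-k) mod 6) + 6 * ((j-k)/6))%Z by lia.
    rewrite per_mult by exact P6.
    unfold det, Defs.tan, vsub; simpl.
    assert ((j-k) mod 6 = 0 \/ (j-k) mod 6 = 1 \/ (j-k) mod 6 = 2 \/ (j-k) mod 6 = 3 \/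
            (j-k) mod 6 = 4 \/ (j-k) mod 6 = 5)%Z as hj by lia.
    destruct hj as [e|[e|[e|[e|[e|e]]]]]; rewrite e; unfold Fd in hc.
    - replace (k+0)%Z with k by ring. tauto.
    - tauto.
    - tauto.
    - tauto.
    - tauto.
    - tauto. }
  destruct (Rlt_le_dec 0 D1) as [hp|hn].
  - left. intros j. specialize (key j). nra.
  - right. intros j. specialize (key j).
    assert (D1 <> 0) by (intro hz; rewrite hz in hs; lra). nra.
Qed.
End RL.

Lemma pos_prod (A B : R) : 0 <= A -> 0 <= B -> A <> 0 -> B <> 0 -> A*B > 0.
Proof. intros h1 h2 h3 h4. destruct (Rle_lt_or_eq_dec _ _ h1); [|congruence].
  destruct (Rle_lt_or_eq_dec _ _ h2); [nra|congruence]. Qed.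
Lemma neg_prod (A B : R) : A <= 0 -> B <= 0 -> A <> 0 -> B <> 0 -> A*B > 0.
Proof. intros h1 h2 h3 h4. destruct (Rle_lt_or_eq_dec _ _ h1); [|congruence].
  destruct (Rle_lt_or_eq_dec _ _ h2); [nra|congruence]. Qed.

Lemma det0 p1 p2 q1 q2 v1 v2 : p1*q2 - p2*q1 <> 0 -> p1*v2 - p2*v1 = 0 -> q1*v2 - q2*v1 = 0 ->
  v1 = 0 /\ v2 = 0.
Proof.
  intros h e1 e2.
  assert (a1 : v1*(p1*q2 - p2*q1) = 0).
  { replace (v1*(p1*q2 - p2*q1)) with (q1*(p1*v2 - p2*v1) - p1*(q1*v2 - q2*v1)) by ring.
    rewrite e1, e2. ring. }
  assert (a2 : v2*(p1*q2 - p2*q1) = 0).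
  { replace (v2*(p1*q2 - p2*q1)) with (q2*(p1*v2 - p2*v1) - p2*(q1*v2 - q2*v1)) by ring.
    rewrite e1, e2. ring. }
  split.
  - destruct (Rmult_integral _ _ a1); [assumption|contradiction].
  - destruct (Rmult_integral _ _ a2); [assumption|contradiction].
Qed.

Section Simp.
Variable r : Z -> pt.
Hypothesis TX : forall a b c d, b = (a+1)%Z -> c = (a+3)%Z -> d = (a+4)%Z ->
  fst (r d) = fst (r c) - fst (r b) + fst (r a).
Hypothesis TY : forall a b c d, b = (a+1)%Z -> c = (a+3)%Z -> d = (a+4)%Z ->
  snd (r d) = snd (r c) - snd (r b) + snd (r a).
Hypothesis P6 : forall a, r (a+6)%Z = r a.
Hypothesis Dpos : forall a b, b = (a+1)%Z -> Dt r b * Dt r a > 0.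

Lemma simp_all : simple_closed r 6.
Proof.
  intros k s1 s2 h1 h2 heq.
  unfold rlin in heq. cbv zeta in heq.
  pose proof (base_Int_part s1) as [b1 c1]. pose proof (base_Int_part s2) as [b2 c2].
  remember (Int_part s1) as i1. remember (Int_part s2) as i2.
  assert (k1 : (k <= i1)%Z).
  { assert (IZR k < IZR (i1+1)) by (rewrite plus_IZR; lra). apply lt_IZR in H. lia. }
  assert (k2 : (i1 < k + 6)%Z).
  { assert (IZR i1 < IZR (k+6)) by (rewrite plus_IZR; lra). apply lt_IZR in H. lia. }
  assert (k3 : (k <= i2)%Z).
  { assert (IZR k < IZR (i2+1)) by (rewrite plus_IZR; lra). apply lt_IZR in H. lia. }
  assert (k4 : (i2 < k + 6)%Z).
  { assert (IZR i2 < IZR (k+6)) by (rewrite plus_IZR; lra). apply lt_IZR in H. lia. }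
  pose proof (f_equal fst heq) as hx. pose proof (f_equal snd heq) as hy.
  unfold vadd, vscale, Defs.tan, vsub in hx, hy; simpl in hx, hy.
  destruct (Z.lt_total i1 i2) as [lt|[eq|gt]].
  - exfalso. apply (no_cross r TX TY P6 Dpos i1 i2 (s1 - IZR i1) (s2 - IZR i2)); try lia; try lra.
  - rewrite <- eq in hx, hy.
    assert (ex : (s1 - IZR i1 - (s2 - IZR i1)) * (fst (r (i1+1)%Z) - fst (r i1)) = 0) by lra.
    assert (ey : (s1 - IZR i1 - (s2 - IZR i1)) * (snd (r (i1+1)%Z) - snd (r i1)) = 0) by lra.
    pose proof (ind_zero _ _ _ (fst (r (i1+2)%Z) - fst (r (i1+1)%Z)) (snd (r (i1+2)%Z) - snd (r (i1+1)%Z)) ex ey) as h.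
    pose proof (Dpos i1 (i1+1)%Z eq_refl) as hd.
    rewrite (Dt_coord r i1 (i1+1)%Z (i1+2)%Z eq_refl eq_refl) in hd.
    unfold D1e in hd.
    destruct (Rmult_integral _ _ h) as [z|z].
    + lra.
    + rewrite z in hd. lra.
  - exfalso. apply (no_cross r TX TY P6 Dpos i2 i1 (s2 - IZR i2) (s1 - IZR i1)); try lia; try lra.
Qed.
End Simp.

Lemma kappa_D r n m : m = (n+1)%Z -> kappa r n = Dt r m / Dt r n.
Proof. intros ->. unfold kappa, Dt. replace (n+1-1)%Z with n by ring. reflexivity. Qed.

Theorem lemma7p11 (r : Z -> pt) :
  nondegenerate r ->
  (forall n : Z, kappa r (n + 6)%Z = kappa r n /\ kappabar r (n + 6)%Z = kappabar r n) ->
  (parallel_hexagon r <->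
   forall n : Z,
     0 < kappa r n /\
     kappa r n = kappa r (n + 3)%Z /\
     kappa r (n + 3)%Z = 1 / kappabar r (n + 1)%Z /\
     1 / kappabar r (n + 1)%Z = 1 / kappabar r (n + 4)%Z /\
     kappa r n * kappa r (n + 1)%Z * kappa r (n + 2)%Z = 1).
Proof.
  intros nd _.
  assert (ndD : forall a, Dt r a <> 0) by (intro a; exact (nd a)).
  split.
  - intros [Hcl [Hsim [Hconv HT]]] n.
    assert (TT : forall a b, b = (a+3)%Z -> Defs.tan r b = vopp (Defs.tan r a)).
    { intros a b ->. apply HT. }
    assert (Dt3 : forall a b, b = (a+3)%Z -> Dt r b = Dt r a).
    { intros a b ->. unfold Dt. rewrite (TT (a-1)%Z (a+3-1)%Z) by lia.
      rewrite (TT a (a+3)%Z) by lia. unfold det, vopp; simpl; ring. }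
    assert (Et1 : forall a b, b = (a+1)%Z -> Et r b = Dt r a).
    { intros a b ->. unfold Et, Dt. replace (a+1-1)%Z with a by ring.
      rewrite (TT (a-1)%Z (a+1+1)%Z) by lia. unfold det, vopp; simpl; ring. }
    assert (Dsg : forall a, Dt r (a+1)%Z * Dt r a > 0).
    { intros a.
      assert (eA : det (Defs.tan r a) (vsub (r (a+2)%Z) (r a)) = Dt r (a+1)%Z).
      { rewrite (Dt_coord r a (a+1)%Z (a+2)%Z eq_refl eq_refl). unfold D1e, det, Defs.tan, vsub; simpl. ring. }
      assert (eB : det (Defs.tan r a) (vsub (r (a-1)%Z) (r a)) = Dt r a).
      { rewrite (Dt_coord r (a-1)%Z a (a+1)%Z ltac:(lia) ltac:(lia)). unfold D1e, det, Defs.tan, vsub; simpl.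
        replace (a-1+1)%Z with a by ring. ring. }
      destruct (Hconv a) as [hc|hc].
      + pose proof (hc (a+2)%Z) as h1. pose proof (hc (a-1)%Z) as h2. rewrite eA in h1. rewrite eB in h2.
        apply pos_prod; auto.
      + pose proof (hc (a+2)%Z) as h1. pose proof (hc (a-1)%Z) as h2. rewrite eA in h1. rewrite eB in h2.
        apply neg_prod; auto. }
    rewrite (kappa_D r n (n+1)%Z eq_refl).
    rewrite (kappa_D r (n+1)%Z (n+2)%Z ltac:(ring)).
    rewrite (kappa_D r (n+2)%Z (n+3)%Z ltac:(ring)).
    rewrite (kappa_D r (n+3)%Z (n+4)%Z ltac:(ring)).
    change (kappabar r (n+1)%Z) with (Et r (n+1)%Z / Dt r (n+1)%Z).
    change (kappabar r (n+4)%Z) with (Et r (n+4)%Z / Dt r (n+4)%Z).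
    rewrite (Et1 n (n+1)%Z eq_refl), (Et1 (n+3)%Z (n+4)%Z ltac:(ring)).
    rewrite (Dt3 (n+1)%Z (n+4)%Z ltac:(ring)), (Dt3 n (n+3)%Z eq_refl).
    pose proof (Dsg n) as s1. pose proof (ndD n). pose proof (ndD (n+1)%Z). pose proof (ndD (n+2)%Z).
    split; [| split; [reflexivity | split; [field; auto | split; [reflexivity | field; auto]]]].
    replace (Dt r (n+1)%Z / Dt r n) with (Dt r (n+1)%Z * Dt r n * / (Dt r n * Dt r n)) by (field; auto).
    apply Rmult_lt_0_compat; [lra|]. apply Rinv_0_lt_compat. nra.
  - intros H.
    assert (B1 : forall n, Dt r (n+3)%Z = Dt r n).
    { intros n. destruct (H n) as (_ & _ & _ & _ & h).
      rewrite (kappa_D r n (n+1)%Z eq_refl), (kappa_D r (n+1)%Z (n+2)%Z ltac:(ring)),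
        (kappa_D r (n+2)%Z (n+3)%Z ltac:(ring)) in h.
      pose proof (ndD n). pose proof (ndD (n+1)%Z). pose proof (ndD (n+2)%Z).
      replace (Dt r (n+3)%Z) with ((Dt r (n+1)%Z / Dt r n * (Dt r (n+2)%Z / Dt r (n+1)%Z) * (Dt r (n+3)%Z / Dt r (n+2)%Z)) * Dt r n) by (field; auto).
      rewrite h. ring. }
    assert (B2 : forall n, Et r (n+1)%Z = Dt r n).
    { intros n. destruct (H n) as (hp & h1 & h2 & _ & _).
      rewrite <- h1 in h2. change (kappabar r (n+1)%Z) with (Et r (n+1)%Z / Dt r (n+1)%Z) in h2.
      rewrite (kappa_D r n (n+1)%Z eq_refl) in hp, h2.
      pose proof (ndD n). pose proof (ndD (n+1)%Z).
      destruct (Req_dec (Et r (n+1)%Z) 0) as [z|z].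
      - rewrite z in h2. unfold Rdiv in h2 at 2 3. rewrite Rmult_0_l, Rinv_0, Rmult_0_r in h2. lra.
      - replace (Et r (n+1)%Z) with (Dt r (n+1)%Z / (1 / (Et r (n+1)%Z / Dt r (n+1)%Z))) by (field; auto).
        rewrite <- h2. field; auto. }
    assert (Bsg : forall n, Dt r (n+1)%Z * Dt r n > 0).
    { intros n. destruct (H n) as (hp & _).
      rewrite (kappa_D r n (n+1)%Z eq_refl) in hp. pose proof (ndD n).
      replace (Dt r (n+1)%Z * Dt r n) with (Dt r (n+1)%Z / Dt r n * (Dt r n * Dt r n)) by (field; auto).
      apply Rmult_lt_0_compat; [lra|]. nra. }
    assert (T : forall k, Defs.tan r (k+3)%Z = vopp (Defs.tan r k)).
    { intros k.
      assert (e1 : det (Defs.tan r (k+1)%Z) (Defs.tan r (k+3)%Z) = det (Defs.tan r k) (Defs.tan r (k+1)%Z)).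
      { pose proof (B2 (k+1)%Z) as b. unfold Et, Dt in b.
        replace (k+1+1-1)%Z with (k+1)%Z in b by ring. replace (k+1+1+1)%Z with (k+3)%Z in b by ring.
        replace (k+1-1)%Z with k in b by ring. exact b. }
      assert (e2 : det (Defs.tan r (k+2)%Z) (Defs.tan r (k+3)%Z) = det (Defs.tan r k) (Defs.tan r (k+2)%Z)).
      { pose proof (B2 k) as b. pose proof (B1 k) as b'. unfold Et, Dt in b, b'.
        replace (k+1-1)%Z with k in b by ring. replace (k+1+1)%Z with (k+2)%Z in b by ring.
        replace (k+3-1)%Z with (k+2)%Z in b' by ring. congruence. }
      assert (e3 : det (Defs.tan r (k+1)%Z) (Defs.tan r (k+2)%Z) <> 0).
      { pose proof (ndD (k+2)%Z) as b. unfold Dt in b. replace (k+2-1)%Z with (k+1)%Z in b by ring. exact b. }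
      destruct (Defs.tan r k) as [a1 a2]. destruct (Defs.tan r (k+1)%Z) as [p1 p2].
      destruct (Defs.tan r (k+2)%Z) as [q1 q2]. destruct (Defs.tan r (k+3)%Z) as [w1 w2].
      unfold det, vopp in *; simpl in *.
      destruct (det0 p1 p2 q1 q2 (w1 + a1) (w2 + a2)) as [z1 z2]; [exact e3|lra|lra|].
      f_equal; lra. }
    assert (TX : forall a b c d, b = (a+1)%Z -> c = (a+3)%Z -> d = (a+4)%Z ->
      fst (r d) = fst (r c) - fst (r b) + fst (r a)).
    { intros a b c d -> -> ->. pose proof (f_equal fst (T a)) as h.
      unfold Defs.tan, vsub, vopp in h; simpl in h. replace (a+3+1)%Z with (a+4)%Z in h by ring. lra. }
    assert (TY : forall a b c d, b = (a+1)%Z -> c = (a+3)%Z -> d = (a+4)%Z ->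
      snd (r d) = snd (r c) - snd (r b) + snd (r a)).
    { intros a b c d -> -> ->. pose proof (f_equal snd (T a)) as h.
      unfold Defs.tan, vsub, vopp in h; simpl in h. replace (a+3+1)%Z with (a+4)%Z in h by ring. lra. }
    assert (P6 : forall a, r (a+6)%Z = r a).
    { intros a. apply injective_projections.
      - pose proof (TX a (a+1)%Z (a+3)%Z (a+4)%Z eq_refl eq_refl eq_refl).
        pose proof (TX (a+1)%Z (a+2)%Z (a+4)%Z (a+5)%Z ltac:(ring) ltac:(ring) ltac:(ring)).
        pose proof (TX (a+2)%Z (a+3)%Z (a+5)%Z (a+6)%Z ltac:(ring) ltac:(ring) ltac:(ring)). lra.
      - pose proof (TY a (a+1)%Z (a+3)%Z (a+4)%Z eq_refl eq_refl eq_refl).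
        pose proof (TY (a+1)%Z (a+2)%Z (a+4)%Z (a+5)%Z ltac:(ring) ltac:(ring) ltac:(ring)).
        pose proof (TY (a+2)%Z (a+3)%Z (a+5)%Z (a+6)%Z ltac:(ring) ltac:(ring) ltac:(ring)). lra. }
    assert (Dpos : forall a b, b = (a+1)%Z -> Dt r b * Dt r a > 0).
    { intros a b ->. apply Bsg. }
    split; [|split; [|split]].
    + split; [lia|]. split; [exact P6|].
      intros p hp Hp.
      pose proof (nd 1%Z) as n1. simpl in n1. unfold det, Defs.tan, vsub in n1; simpl in n1.
      pose proof (Hp 0%Z) as h0. pose proof (Hp 1%Z) as h1.
      assert (p = 1 \/ p = 2 \/ p = 3 \/ p = 4 \/ p = 5)%Z as hq by lia.
      destruct hq as [e|[e|[e|[e|e]]]]; subst p; simpl in h0, h1.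
      * rewrite h0 in n1. apply n1; ring.
      * rewrite h0 in n1. apply n1; ring.
      * pose proof (TX 0%Z 1%Z 3%Z 4%Z eq_refl eq_refl eq_refl) as tx.
        pose proof (TY 0%Z 1%Z 3%Z 4%Z eq_refl eq_refl eq_refl) as ty.
        rewrite h0, h1 in tx, ty. apply n1.
        replace (fst (r 1%Z)) with (fst (r 0%Z)) by lra.
        replace (snd (r 1%Z)) with (snd (r 0%Z)) by lra. ring.
      * pose proof (TX 1%Z 2%Z 4%Z 5%Z eq_refl eq_refl eq_refl) as tx.
        pose proof (TY 1%Z 2%Z 4%Z 5%Z eq_refl eq_refl eq_refl) as ty.
        rewrite h0, h1 in tx, ty. apply n1.
        replace (fst (r 2%Z)) with (fst (r 0%Z)) by lra.
        replace (snd (r 2%Z)) with (snd (r 0%Z)) by lra. ring.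
      * pose proof (P6 0%Z) as p0. simpl in p0. rewrite h1 in p0.
        rewrite p0 in n1. apply n1; ring.
    + exact (simp_all r TX TY P6 Dpos).
    + exact (conv_all r TX TY P6 Dpos).
    + exact T.
Qed.
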